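(* If $G$ is a connected graph and $f=(V_0,V_1,V_2)$ is an OIRD function of $G$ of minimum weight $\gamma_{oiR}(G)$ (where $V_i=\{v: f(v)=i\}$), then $\gamma_{oidR}(G)\le 2\gamma_{oiR}(G)-|V_2|$.
   Context: A DRD function of $G$ is $f:V(G)\to\{0,1,2,3\}$ such that every vertex with value $0$ has a neighbor with value $3$ or two neighbors with value $2$, and every vertex with value $1$ has a neighbor with value at least $2$; it is an OIDRD function if the set of vertices with value $0$ is independent, and $\gamma_{oidR}(G)$ is the minimum weight $\sum_v f(v)$ of an OIDRD function. A Roman dominating function is $f:V(G)\to\{0,1,2\}$ such that every vertex with value $0$ has a neighbor with value $2$; it is an OIRD function if the set of vertices with value $0$ is independent, and $\gamma_{oiR}(G)$ is the minimum weight of an OIRD function. *)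

(* Defs.v *)
From mathcomp Require Import all_boot.
Set Implicit Arguments. Unset Strict Implicit. Unset Printing Implicit Defensive.

(* A finite simple graph: vertex set T (finType), adjacency e : rel T,
   symmetric and irreflexive. Labelings are functions f : T -> nat. *)

Section Defs.
Variables (T : finType) (e : rel T).

Definition connected_graph : Prop := forall x y : T, connect e x y.

Definition weight (f : T -> nat) : nat := \sum_(v : T) f v.

Definition Vset (f : T -> nat) (i : nat) : {set T} := [set v | f v == i].

Definition zeros_independent (f : T -> nat) : bool :=
  [forall u, forall v, ~~ [&& e u v, f u == 0 & f v == 0]].

Definition is_DRD (f : T -> nat) : bool :=
  [forall v, f v <= 3] &&
  [forall v, (f v == 0) ==>
     ([exists u, e v u && (f u == 3)] || (2 <= #|[set u | e v u & f u == 2]|))] &&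
  [forall v, (f v == 1) ==> [exists u, e v u && (2 <= f u)]].

Definition is_OIDRD (f : T -> nat) : bool := is_DRD f && zeros_independent f.

Definition is_RD (f : T -> nat) : bool :=
  [forall v, f v <= 2] &&
  [forall v, (f v == 0) ==> [exists u, e v u && (f u == 2)]].

Definition is_OIRD (f : T -> nat) : bool := is_RD f && zeros_independent f.

(* minimum weights; every OIDRD (resp. OIRD) function takes values in
   {0..3} (resp. {0..2}), so it suffices to range over finite functions
   into 'I_4 (resp. 'I_3). The constant-3 (resp. constant-2) function is
   admissible, so the initial value of the min is an attained weight. *)
Definition gamma_oidR : nat :=
  \big[minn/3 * #|T|]_(g : {ffun T -> 'I_4} | is_OIDRD (fun v => nat_of_ord (g v)))
     weight (fun v => nat_of_ord (g v)).

Definition gamma_oiR : nat :=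
  \big[minn/2 * #|T|]_(g : {ffun T -> 'I_3} | is_OIRD (fun v => nat_of_ord (g v)))
     weight (fun v => nat_of_ord (g v)).

End Defs.

(* Main.v *)
Require Import Defs.
From mathcomp Require Import all_boot.
From mathcomp Require Import zify.

Lemma bigmin_le_seq (I : eqType) (r : seq I) (P : pred I) (F : I -> nat) x j :
  j \in r -> P j -> \big[minn/x]_(i <- r | P i) F i <= F j.
Proof.
elim: r => [|a r IH] //= Hj Pj; rewrite big_cons.
rewrite in_cons in Hj; case/orP: Hj => [/eqP Ej|Hj].
  by subst; rewrite Pj geq_minl.
case: (P a); last exact: IH.
by rewrite geq_min IH // orbT.
Qed.

Theorem corollary1 (T : finType) (e : rel T)
  (e_sym : symmetric e) (e_irr : irreflexive e)
  (G_conn : connected_graph e)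
  (f : T -> nat) (f_oird : is_OIRD e f)
  (f_min : weight f = gamma_oiR e) :
  gamma_oidR e <= 2 * gamma_oiR e - #|Vset f 2|.
Proof.
move: f_oird; rewrite /is_OIRD /is_RD => /andP[/andP[/forallP Hle /forallP Hdom] /forallP Hind].
pose h (n : nat) : nat := if n == 0 then 0 else if n == 1 then 2 else 3.
have hlt : forall n, h n < 4 by move=> n; rewrite /h; case: ifP => //; case: ifP.
pose g : {ffun T -> 'I_4} := [ffun v => Ordinal (hlt (f v))].
have gE : forall v, nat_of_ord (g v) = h (f v) by move=> v; rewrite ffunE.
have Hg : is_OIDRD e (fun v => nat_of_ord (g v)).
  rewrite /is_OIDRD /is_DRD; apply/andP; split; first (apply/andP; split; first (apply/andP; split)).
  - by apply/forallP => v; rewrite gE -ltnS hlt.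
  - apply/forallP => v; apply/implyP; rewrite gE /h.
    have := Hdom v; case E: (f v == 0) => /=; last by move=> _; case: ifP.
    move=> /existsP[u /andP[euv fu]] _.
    apply/orP; left; apply/existsP; exists u; rewrite euv gE /h (eqP fu) //.
  - apply/forallP => v; apply/implyP; rewrite gE /h.
    by case: ifP => //; case: ifP.
  - apply/forallP => u; apply/forallP => v; rewrite !gE /h.
    have := Hind u; move/forallP/(_ v).
    by case: (f u == 0); case: (f v == 0) => //=; repeat case: ifP.
have H1 : gamma_oidR e <= weight (fun v => nat_of_ord (g v)).
  by rewrite /gamma_oidR; apply: bigmin_le_seq => //; rewrite mem_index_enum.
have H2 : weight (fun v => nat_of_ord (g v)) + #|Vset f 2| = 2 * weight f.
  rewrite /weight /Vset -sum1_card [X in _ + X = _]big_mkcond /= big_distrr /= -big_split /=.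
  apply: eq_bigr => v _; rewrite gE /h inE.
  have := Hle v; case: (f v) => [|[|[|n]]] //=.
rewrite -f_min; lia.
Qed.
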